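(* On the set of persistence diagrams all of whose points have strictly positive coordinates, let $A\sim A'$ iff $A=cA'$ for some $c>0$. Then $D_S([A],[B]):=\overline{d_S}(\log A,\log B)$ is well defined on equivalence classes (independent of representatives) and is a metric on the set of equivalence classes.
   Context: A persistence diagram here is a finite multiset of points $(a_x,a_y)$ with $0<a_x<a_y<\infty$, together with the diagonal $\Delta$ of infinite multiplicity. $cA=\{(ca_x,ca_y)\}$ for $c>0$. $\log A=\{(\log a_x,\log a_y): a\in A\}$ (a finite multiset of points above the diagonal, plus the diagonal). For such multisets and $s\in\mathbb{R}$, $A+s=\{(a_x+s,a_y+s)\}$. The bottleneck distance $d_\infty(A,B)$ is the infimum over multi-bijections between $A\cup\Delta$ and $B\cup\Delta$ of the maximal $\ell^\infty$ matching distance. The shift-invariant bottleneck distance is $\overline{d_S}(A,B)=\inf_{s\in\mathbb{R}}d_\infty(A+s,B)$. *)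

(* Defs.v *)
From mathcomp Require Import all_boot all_order all_algebra.
From mathcomp Require Import all_classical all_reals all_analysis.
Set Implicit Arguments. Unset Strict Implicit. Unset Printing Implicit Defensive.
Import Order.TTheory GRing.Theory Num.Theory.
Local Open Scope ring_scope.

Section PD.
Variable R : realType.

(* A finite multiset of points of R^2, represented by a list (order irrelevant). *)
Definition pts := seq (R * R).

Definition is_pdiag (A : pts) : Prop := forall p, p \in A -> 0 < p.1 /\ p.1 < p.2.

Definition pd_scale (c : R) (A : pts) : pts := map (fun p => (c * p.1, c * p.2)) A.
Definition pd_shift (A : pts) (s : R) : pts := map (fun p => (p.1 + s, p.2 + s)) A.
Definition pd_log (A : pts) : pts := map (fun p => (ln p.1, ln p.2)) A.

Definition linf (p q : R * R) : R := Num.max `|p.1 - q.1| `|p.2 - q.2|.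

(* A multi-bijection between A u Delta and B u Delta is encoded by:
   - a partial injection f from (indices of) A to (indices of) B,
   - for each point of A not matched into B, the diagonal point (tA i, tA i)
     it is matched to,
   - for each point of B not hit by f, the diagonal point (tB k, tB k)
     it is matched to;
   the remaining diagonal points are matched to themselves (cost 0). *)
Definition partial_inj m n (f : 'I_m -> option 'I_n) : Prop :=
  forall i j k, f i = Some k -> f j = Some k -> i = j.

Definition matching_cost (A B : pts) (f : 'I_(size A) -> option 'I_(size B))
    (tA : 'I_(size A) -> R) (tB : 'I_(size B) -> R) : R :=
  Num.max
    (\big[Num.max/0]_(i < size A)
        match f i with
        | Some k => linf (nth (0,0) A i) (nth (0,0) B k)
        | None => linf (nth (0,0) A i) (tA i, tA i)
        end)
    (\big[Num.max/0]_(k < size B | [forall i, f i != Some k])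
        linf (nth (0,0) B k) (tB k, tB k)).

Definition bottleneck (A B : pts) : R :=
  inf [set c : R | exists (f : 'I_(size A) -> option 'I_(size B))
                          (tA : 'I_(size A) -> R) (tB : 'I_(size B) -> R),
                     partial_inj f /\ c = matching_cost f tA tB].

Definition dS_bar (A B : pts) : R :=
  inf [set d : R | exists s : R, d = bottleneck (pd_shift A s) B].

Definition pd_equiv (A A' : pts) : Prop :=
  exists c : R, 0 < c /\ perm_eq A (pd_scale c A').

Definition D_S (A B : pts) : R := dS_bar (pd_log A) (pd_log B).

End PD.

(* Main.v *)
Require Import Defs.
From mathcomp Require Import all_boot all_order all_algebra.
From mathcomp Require Import all_classical all_reals all_analysis.
From mathcomp Require Import ring lra.
Import Order.TTheory GRing.Theory Num.Theory.
Local Open Scope ring_scope.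

Section Aux.
Variable R : realType.
Local Open Scope classical_set_scope.
Implicit Types A B C : pts R.
Implicit Types p q : (R * R)%type.

Lemma bm_le (I : eqType) (r : seq I) (P : pred I) (F : I -> R) (c : R) :
  0 <= c -> (forall i, i \in r -> P i -> F i <= c) ->
  \big[Num.max/0]_(i <- r | P i) F i <= c.
Proof.
move=> c0; elim: r => [|x r IH] H; first by rewrite big_nil.
rewrite big_cons; case: ifP => Px.
  rewrite ge_max (H x (mem_head _ _) Px) /=.
  by apply: IH => i ir; apply: H; rewrite inE ir orbT.
by apply: IH => i ir; apply: H; rewrite inE ir orbT.
Qed.

Lemma le_maxl (x y : R) : x <= Num.max x y.
Proof. by rewrite le_max lexx. Qed.
Lemma le_maxr (x y : R) : y <= Num.max x y.
Proof. by rewrite le_max lexx orbT. Qed.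

Lemma le_bm (I : eqType) (r : seq I) (P : pred I) (F : I -> R) i :
  i \in r -> P i -> F i <= \big[Num.max/0]_(j <- r | P j) F j.
Proof.
elim: r => [//|x r IH]; rewrite inE => /orP[/eqP->|ir] Pi; rewrite big_cons.
  by rewrite Pi le_max lexx.
by case: ifP => _; rewrite ?le_max IH ?orbT.
Qed.

Lemma bm_ge0 (I : eqType) (r : seq I) (P : pred I) (F : I -> R) :
  0 <= \big[Num.max/0]_(j <- r | P j) F j.
Proof.
elim: r => [|x r IH]; rewrite ?big_nil // big_cons.
by case: ifP => _ //; rewrite le_max IH orbT.
Qed.

Lemma linf_ge0 p q : 0 <= linf p q.
Proof. by rewrite /linf le_max normr_ge0. Qed.

Lemma linfC p q : linf p q = linf q p.
Proof. by rewrite /linf distrC [`|p.2 - _|]distrC. Qed.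

Lemma linf_tri p q (r : R * R) : linf p r <= linf p q + linf q r.
Proof.
rewrite /linf ge_max; apply/andP; split.
  apply: le_trans (ler_distD q.1 _ _) _; apply: lerD; rewrite le_max lexx //.
apply: le_trans (ler_distD q.2 _ _) _; apply: lerD; rewrite le_max lexx ?orbT //.
Qed.

Lemma linf_diag p t : (p.2 - p.1) / 2 <= linf p (t, t).
Proof.
rewrite /linf /=.
have h1 : `|p.1 - t| <= Num.max `|p.1 - t| `|p.2 - t| by rewrite le_max lexx.
have h2 : `|p.2 - t| <= Num.max `|p.1 - t| `|p.2 - t| by rewrite le_max lexx orbT.
have h3 : p.2 - p.1 <= `|p.1 - t| + `|p.2 - t|.
  apply: le_trans (ler_norm _) _; apply: le_trans (ler_distD t _ _) _.
  by rewrite addrC [`|t - _|]distrC.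
rewrite ler_pdivrMr //; apply: le_trans h3 _; rewrite mulr2n mulrDr mulr1.
by apply: lerD.
Qed.

Lemma cost_ge0 A B f tA tB : 0 <= @matching_cost R A B f tA tB.
Proof. by rewrite /matching_cost le_max bm_ge0. Qed.

Lemma bn_set_ne A B :
  [set c : R | exists (f : 'I_(size A) -> option 'I_(size B))
                          (tA : 'I_(size A) -> R) (tB : 'I_(size B) -> R),
                     partial_inj f /\ c = matching_cost f tA tB] !=set0.
Proof.
exists (matching_cost (fun _ : 'I_(size A) => @None 'I_(size B)) (fun _ => 0) (fun _ => 0)).
by exists (fun _ => None), (fun _ => 0), (fun _ => 0); split.
Qed.

Lemma bn_ge0 A B : 0 <= bottleneck A B.
Proof.
apply: lb_le_inf; first exact: bn_set_ne.
by move=> c [f [tA [tB [_ ->]]]]; apply: cost_ge0.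
Qed.

Lemma bn_le A B f tA tB : partial_inj f ->
  bottleneck A B <= @matching_cost R A B f tA tB.
Proof.
move=> pf; apply: ge_inf; last by exists f, tA, tB.
by exists 0 => c [g [sA [sB [_ ->]]]]; apply: cost_ge0.
Qed.

Lemma bn_ge A B x :
  (forall f tA tB, partial_inj f -> x <= @matching_cost R A B f tA tB) ->
  x <= bottleneck A B.
Proof.
move=> H; apply: lb_le_inf; first exact: bn_set_ne.
by move=> c [f [tA [tB [pf ->]]]]; apply: H.
Qed.


Lemma nthm (g : R * R -> R * R) A (i : nat) : (i < size A)%N ->
  nth (0,0) (map g A) i = g (nth (0,0) A i).
Proof. by move=> h; rewrite (nth_map (0,0)). Qed.

Lemma bn_map A B (g : R * R -> R * R) (phi : R -> R) :
  (forall p q, linf (g p) (g q) <= linf p q) ->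
  (forall p t, linf (g p) (phi t, phi t) <= linf p (t, t)) ->
  bottleneck (map g A) (map g B) <= bottleneck A B.
Proof.
move=> Hg Hd; apply: bn_ge => f tA tB pf.
have eA : size (map g A) = size A by rewrite size_map.
have eB : size (map g B) = size B by rewrite size_map.
pose f' := fun i => omap (cast_ord (esym eB)) (f (cast_ord eA i)).
pose tA' := fun i => phi (tA (cast_ord eA i)).
pose tB' := fun k => phi (tB (cast_ord eB k)).
have pf' : partial_inj f'.
  move=> i j k; rewrite /f'.
  case Ei: (f _) => [a|] //= [Ea]; case Ej: (f _) => [b|] //= [Eb].
  have ab : a = b by rewrite -(cast_ordK (esym eB) a) Ea -Eb cast_ordK.
  subst b; have := pf _ _ _ Ei Ej => /(congr1 (cast_ord (esym eA))).
  by rewrite !cast_ordK.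
apply: le_trans (bn_le _ _ _ tA' tB' pf') _.
have c0 := cost_ge0 _ _ f tA tB.
rewrite {1}/matching_cost ge_max; apply/andP; split.
  apply: bm_le => // i _ _; rewrite /f' /tA'.
  have iA : (i < size A)%N by rewrite -eA.
  rewrite nthm //.
  case Ei: (f _) => [k|] /=.
    have kB : (k < size B)%N by [].
    rewrite nthm //.
    apply: le_trans (Hg _ _) _.
    apply: le_trans _ (le_maxl _ _ ); rewrite /matching_cost.
    have := @le_bm _ _ (fun _ => true) (fun i => match f i with
         | Some k => linf (nth (0, 0) A i) (nth (0, 0) B k)
         | None => linf (nth (0, 0) A i) (tA i, tA i)
         end) _ (mem_index_enum (cast_ord eA i)) (erefl true).
    by rewrite Ei.
  apply: le_trans (Hd _ _) _.
  apply: le_trans _ (le_maxl _ _ ); rewrite /matching_cost.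
  have := @le_bm _ _ (fun _ => true) (fun i => match f i with
       | Some k => linf (nth (0, 0) A i) (nth (0, 0) B k)
       | None => linf (nth (0, 0) A i) (tA i, tA i)
       end) _ (mem_index_enum (cast_ord eA i)) (erefl true).
  by rewrite Ei.
apply: bm_le => // k _ /forallP Hk; rewrite /tB'.
have kB : (k < size B)%N by rewrite -eB.
rewrite nthm //; apply: le_trans (Hd _ _) _.
apply: le_trans _ (le_maxr _ _); rewrite /matching_cost.
apply: (@le_bm _ _ (fun k => [forall i, f i != Some k]) (fun k => linf (nth (0, 0) B k) (tB k, tB k)) _ (mem_index_enum (cast_ord eB k))).
apply/forallP => i; apply/negP => /eqP E.
have := Hk (cast_ord (esym eA) i); rewrite /f' cast_ordKV E /= cast_ordK.
by rewrite eqxx.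
Qed.


Lemma bn_sym_le A B : bottleneck B A <= bottleneck A B.
Proof.
apply: bn_ge => f tA tB pf.
pose g := fun k : 'I_(size B) => [pick i | f i == Some k].
have gS : forall k i, g k = Some i -> f i = Some k.
  by move=> k i; rewrite /g; case: pickP => // j /eqP E [<-].
have gN : forall k, g k = None -> forall i, f i != Some k.
  by move=> k; rewrite /g; case: pickP => // H _ i; rewrite H.
have fS : forall i k, f i = Some k -> g k = Some i.
  move=> i k E; rewrite /g; case: pickP => [j /eqP Ej|H].
    by rewrite (pf _ _ _ Ej E).
  by have := H i; rewrite E eqxx.
have pg : partial_inj g.
  move=> k l i /gS E1 /gS E2; rewrite E1 in E2; by case: E2.
apply: le_trans (bn_le _ _ _ tB tA pg) _.
have c0 := cost_ge0 _ _ f tA tB.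
rewrite {1}/matching_cost ge_max; apply/andP; split.
  apply: bm_le => // k _ _.
  case E: (g k) => [i|].
    apply: le_trans _ (le_maxl _ _); rewrite linfC.
    have := @le_bm _ _ (fun _ => true) (fun i => match f i with
         | Some k => linf (nth (0, 0) A i) (nth (0, 0) B k)
         | None => linf (nth (0, 0) A i) (tA i, tA i)
         end) _ (mem_index_enum i) (erefl true).
    by rewrite (gS _ _ E).
  apply: le_trans _ (le_maxr _ _).
  apply: (@le_bm _ _ (fun k => [forall i, f i != Some k]) (fun k => linf (nth (0, 0) B k) (tB k, tB k)) _ (mem_index_enum k)).
  by apply/forallP; apply: gN.
apply: bm_le => // i _ /forallP H.
have fN : f i = None.
  case E: (f i) => [k|] //; have := H k; by rewrite (fS _ _ E) eqxx.
apply: le_trans _ (le_maxl _ _).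
have := @le_bm _ _ (fun _ => true) (fun i => match f i with
     | Some k => linf (nth (0, 0) A i) (nth (0, 0) B k)
     | None => linf (nth (0, 0) A i) (tA i, tA i)
     end) _ (mem_index_enum i) (erefl true).
by rewrite fN.
Qed.

Lemma bnC A B : bottleneck A B = bottleneck B A.
Proof. by apply/eqP; rewrite eq_le !bn_sym_le. Qed.


Lemma cost_some A B (f : 'I_(size A) -> option 'I_(size B)) tA tB i k : f i = Some k ->
  linf (nth (0,0) A i) (nth (0,0) B k) <= @matching_cost R A B f tA tB.
Proof.
move=> E; apply: le_trans _ (le_maxl _ _).
have := @le_bm _ _ (fun _ => true) (fun i => match f i with
     | Some k => linf (nth (0, 0) A i) (nth (0, 0) B k)
     | None => linf (nth (0, 0) A i) (tA i, tA i)
     end) _ (mem_index_enum i) (erefl true).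
by rewrite E.
Qed.

Lemma cost_none A B (f : 'I_(size A) -> option 'I_(size B)) tA tB i : f i = None ->
  linf (nth (0,0) A i) (tA i, tA i) <= @matching_cost R A B f tA tB.
Proof.
move=> E; apply: le_trans _ (le_maxl _ _).
have := @le_bm _ _ (fun _ => true) (fun i => match f i with
     | Some k => linf (nth (0, 0) A i) (nth (0, 0) B k)
     | None => linf (nth (0, 0) A i) (tA i, tA i)
     end) _ (mem_index_enum i) (erefl true).
by rewrite E.
Qed.

Lemma cost_un A B (f : 'I_(size A) -> option 'I_(size B)) tA tB k : (forall i, f i != Some k) ->
  linf (nth (0,0) B k) (tB k, tB k) <= @matching_cost R A B f tA tB.
Proof.
move=> H; apply: le_trans _ (le_maxr _ _).
apply: (@le_bm _ _ (fun k => [forall i, f i != Some k]) (fun k => linf (nth (0, 0) B k) (tB k, tB k)) _ (mem_index_enum k)).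
by apply/forallP.
Qed.

Lemma bn_tri A B C : bottleneck A C <= bottleneck A B + bottleneck B C.
Proof.
suff H : forall f tA tB g sB sC, partial_inj f -> partial_inj g ->
    bottleneck A C <= @matching_cost R A B f tA tB + @matching_cost R B C g sB sC.
  rewrite -lerBlDl; apply: bn_ge => f tA tB pf.
  rewrite lerBlDl addrC -lerBlDl; apply: bn_ge => g sB sC pg.
  by rewrite lerBlDl addrC H.
move=> f tA tB g sB sC pf pg.
pose h := fun i => match f i with Some k => g k | None => None end.
pose tA' := fun i => match f i with Some k => sB k | None => tA i end.
pose tC' := fun l => match [pick k | g k == Some l] with
                     Some k => tB k | None => sC l end.
have ph : partial_inj h.
  move=> i j l; rewrite /h.
  case Ei: (f i) => [k|] //; case Ej: (f j) => [k'|] // E1 E2.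
  have kk : k = k' by apply: (pg _ _ l).
  by subst k'; apply: (pf _ _ k).
apply: le_trans (bn_le _ _ _ tA' tC' ph) _.
set c1 := matching_cost f tA tB; set c2 := matching_cost g sB sC.
have c10 : 0 <= c1 by apply: cost_ge0.
have c20 : 0 <= c2 by apply: cost_ge0.
rewrite {1}/matching_cost ge_max; apply/andP; split.
  apply: bm_le; first by rewrite addr_ge0.
  move=> i _ _; rewrite /h /tA'.
  case Ei: (f i) => [k|].
    case Ek: (g k) => [l|].
      apply: le_trans (linf_tri _ (nth (0,0) B k) _) _.
      by apply: lerD; [apply: cost_some Ei | apply: cost_some Ek].
    apply: le_trans (linf_tri _ (nth (0,0) B k) _) _.
    by apply: lerD; [apply: cost_some Ei | apply: cost_none Ek].
  by rewrite -[linf _ _]addr0; apply: lerD => //; apply: cost_none.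
apply: bm_le; first by rewrite addr_ge0.
move=> l _ /forallP Hl; rewrite /tC'.
case: pickP => [k /eqP Ek | Hn].
  have Hk : forall i, f i != Some k.
    move=> i; apply/negP => /eqP Ei; have := Hl i; by rewrite /h Ei Ek eqxx.
  apply: le_trans (linf_tri _ (nth (0,0) B k) _) _.
  rewrite [c1 + c2]addrC; apply: lerD; last by apply: cost_un.
  by rewrite linfC; apply: cost_some Ek.
rewrite -[linf _ _]add0r; apply: lerD => //; apply: cost_un.
by move=> k; rewrite Hn.
Qed.


Lemma linf0 p : linf p p = 0.
Proof. by rewrite /linf !subrr normr0 maxxx. Qed.

Lemma bn_perm (a b : pts R) : perm_eq a b -> bottleneck a b = 0.
Proof.
move=> /(perm_iotaP (0,0)) [Is pI Ea].
have uI : uniq Is by rewrite (perm_uniq pI) iota_uniq.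
have sI : size Is = size b by rewrite (perm_size pI) size_iota.
have sa : size a = size b by rewrite Ea size_map.
have Imem : forall j, (j < size a)%N -> (nth 0%N Is j < size b)%N.
  move=> j hj; have : nth 0%N Is j \in iota 0 (size b).
    by rewrite -(perm_mem pI) mem_nth // sI -sa.
  by rewrite mem_iota.
have nthA : forall j, (j < size a)%N -> nth (0,0) a j = nth (0,0) b (nth 0%N Is j).
  by move=> j hj; rewrite {1}Ea (nth_map 0%N) // sI -sa.
pose f := fun i : 'I_(size a) => (insub (nth 0%N Is i) : option 'I_(size b)).
have fv : forall i : 'I_(size a), exists2 k, f i = Some k & val k = nth 0%N Is i.
  move=> i; rewrite /f; case: insubP => [k _ Ek|]; first by exists k.
  by rewrite Imem.
have pf : partial_inj f.
  move=> i j k; have [k1 -> E1] := fv i; have [k2 -> E2] := fv j.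
  move=> [e1] [e2]; subst k1 k2; apply/val_inj/eqP => /=.
  rewrite -(nth_uniq 0%N _ _ uI) ?sI -?sa // -E1 -E2 //.
apply/eqP; rewrite eq_le bn_ge0 andbT.
apply: le_trans (bn_le _ _ f (fun _ => 0) (fun _ => 0) pf) _.
rewrite /matching_cost ge_max; apply/andP; split.
  apply: bm_le => // i _ _; have [k -> Ek] := fv i.
  by rewrite nthA // -Ek linf0.
apply: bm_le => // k _ /forallP H.
have kI : val k \in Is by rewrite (perm_mem pI) mem_iota /=.
have jl : (index (val k) Is < size a)%N.
  move: kI; move: (val k) => x xI; have := index_mem x Is; by rewrite xI sI -sa.
have := H (Ordinal jl); have [k' -> Ek'] := fv (Ordinal jl).
suff -> : k' = k by rewrite eqxx.
by apply/val_inj; rewrite Ek' /= nth_index.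
Qed.


Lemma shift_shift (a : pts R) s t : pd_shift (pd_shift a s) t = pd_shift a (s + t).
Proof. by rewrite /pd_shift -map_comp; apply: eq_map => p /=; rewrite !addrA. Qed.

Lemma shift0 (a : pts R) : pd_shift a 0 = a.
Proof. by rewrite /pd_shift -[RHS]map_id; apply: eq_map => -[x y] /=; rewrite !addr0. Qed.

Lemma bn_shift_le (a b : pts R) t :
  bottleneck (pd_shift a t) (pd_shift b t) <= bottleneck a b.
Proof.
have e : forall x y z : R, (x + z) - (y + z) = x - y.
  by move=> x y z; rewrite opprD addrACA subrr addr0.
apply: (@bn_map a b (fun p => (p.1 + t, p.2 + t)) (fun x => x + t)).
  by move=> p q; rewrite /linf /= !e.
by move=> p s; rewrite /linf /= !e.
Qed.

Lemma bn_shift (a b : pts R) t :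
  bottleneck (pd_shift a t) (pd_shift b t) = bottleneck a b.
Proof.
apply/eqP; rewrite eq_le bn_shift_le /=.
have := bn_shift_le (pd_shift a t) (pd_shift b t) (- t).
by rewrite !shift_shift subrr !shift0.
Qed.

Lemma dS_set_ne (a b : pts R) :
  [set d : R | exists s : R, d = bottleneck (pd_shift a s) b] !=set0.
Proof. by exists (bottleneck (pd_shift a 0) b), 0. Qed.

Lemma dS_le (a b : pts R) s : dS_bar a b <= bottleneck (pd_shift a s) b.
Proof.
apply: ge_inf; last by exists s.
by exists 0 => d [s' ->]; apply: bn_ge0.
Qed.

Lemma dS_ge (a b : pts R) x :
  (forall s, x <= bottleneck (pd_shift a s) b) -> x <= dS_bar a b.
Proof.
move=> H; apply: lb_le_inf; first exact: dS_set_ne.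
by move=> d [s ->].
Qed.

Lemma dS_ge0 (a b : pts R) : 0 <= dS_bar a b.
Proof. by apply: dS_ge => s; apply: bn_ge0. Qed.

Lemma dS_shiftl_le (a b : pts R) t : dS_bar (pd_shift a t) b <= dS_bar a b.
Proof.
apply: dS_ge => s; apply: le_trans (dS_le _ _ (s - t)) _.
by rewrite shift_shift addrC subrK.
Qed.

Lemma dS_shiftl (a b : pts R) t : dS_bar (pd_shift a t) b = dS_bar a b.
Proof.
apply/eqP; rewrite eq_le dS_shiftl_le /=.
by have := dS_shiftl_le (pd_shift a t) b (- t); rewrite shift_shift subrr shift0.
Qed.

Lemma dSC_le (a b : pts R) : dS_bar b a <= dS_bar a b.
Proof.
apply: dS_ge => s; apply: le_trans (dS_le _ _ (- s)) _.
rewrite -(bn_shift _ _ s) shift_shift addNr shift0 bnC.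
by [].
Qed.

Lemma dSC (a b : pts R) : dS_bar a b = dS_bar b a.
Proof. by apply/eqP; rewrite eq_le !dSC_le. Qed.

Lemma dS_shiftr (a b : pts R) t : dS_bar a (pd_shift b t) = dS_bar a b.
Proof. by rewrite dSC dS_shiftl dSC. Qed.

Lemma dS_tri (a b c : pts R) : dS_bar a c <= dS_bar a b + dS_bar b c.
Proof.
suff H : forall s t, dS_bar a c <= bottleneck (pd_shift a s) b + bottleneck (pd_shift b t) c.
  rewrite -lerBlDl; apply: dS_ge => s.
  rewrite lerBlDl addrC -lerBlDl; apply: dS_ge => t.
  by rewrite lerBlDl addrC H.
move=> s t; apply: le_trans (dS_le _ _ (s + t)) _.
apply: le_trans (bn_tri _ (pd_shift b t) _) _.
by rewrite -shift_shift bn_shift.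
Qed.

Lemma dS_perml_le (a a' b : pts R) : perm_eq a a' -> dS_bar a b <= dS_bar a' b.
Proof.
move=> p; apply: le_trans (dS_tri _ a' _) _.
have : dS_bar a a' <= 0 by apply: le_trans (dS_le _ _ 0) _; rewrite shift0 bn_perm.
by move=> h; rewrite -lerBrDr; apply: le_trans h _; rewrite subrr.
Qed.

Lemma dS_perml (a a' b : pts R) : perm_eq a a' -> dS_bar a b = dS_bar a' b.
Proof.
by move=> p; apply/eqP; rewrite eq_le !dS_perml_le // perm_sym.
Qed.

Lemma dS_permr (a b b' : pts R) : perm_eq b b' -> dS_bar a b = dS_bar a b'.
Proof. by move=> p; rewrite dSC (dS_perml _ _ a p) dSC. Qed.

Lemma dS_refl (a : pts R) : dS_bar a a = 0.
Proof.
apply/eqP; rewrite eq_le dS_ge0 andbT.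
by apply: le_trans (dS_le _ _ 0) _; rewrite shift0 bn_perm.
Qed.


Lemma pos_min (s : seq R) : (forall x, x \in s -> 0 < x) ->
  exists2 m, 0 < m & forall x, x \in s -> m <= x.
Proof.
elim: s => [|x s IH] H; first by exists 1.
have [m m0 Hm] := IH (fun y ys => H y (@mem_behead _ (x :: s) _ ys)).
have x0 : 0 < x by apply: H; rewrite mem_head.
exists (Num.min x m); first by rewrite lt_min x0 m0.
move=> y; rewrite inE => /orP[/eqP->|ys]; first by rewrite ge_min lexx.
by rewrite ge_min Hm ?orbT.
Qed.

Lemma gap (s : seq R) : exists2 d, 0 < d &
  forall x y, x \in s -> y \in s -> x != y -> d <= `|x - y|.
Proof.
elim: s => [|x s [d d0 Hd]]; first by exists 1.
have Hpos : forall z : R, z \in [seq `|x - y| | y <- s & y != x] -> 0 < z.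
  move=> z /mapP [y]; rewrite mem_filter => /andP[ne _] ->.
  by rewrite normr_gt0 subr_eq0 eq_sym.
have [m m0 Hm] := @pos_min [seq `|x - y| | y <- s & y != x] Hpos.
exists (Num.min d m); first by rewrite lt_min d0 m0.
move=> u v; rewrite !inE => /orP[/eqP->|us].
  move=> /orP[/eqP->|vs]; first by rewrite eqxx.
  move=> ne; rewrite ge_min; apply/orP; right; apply: Hm.
  by apply: map_f; rewrite mem_filter eq_sym ne.
move=> /orP[/eqP->|vs] ne.
  rewrite ge_min; apply/orP; right; rewrite distrC; apply: Hm.
  by apply: map_f; rewrite mem_filter ne.
by rewrite ge_min Hd.
Qed.


Lemma has_inf_bn (a b : pts R) : has_inf
  [set c : R | exists (f : 'I_(size a) -> option 'I_(size b))
                          (tA : 'I_(size a) -> R) (tB : 'I_(size b) -> R),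
                     partial_inj f /\ c = matching_cost f tA tB].
Proof.
split; first exact: bn_set_ne.
by exists 0 => c [f [tA [tB [_ ->]]]]; apply: cost_ge0.
Qed.

Lemma has_inf_dS (a b : pts R) :
  has_inf [set d : R | exists s : R, d = bottleneck (pd_shift a s) b].
Proof.
split; first exact: dS_set_ne.
by exists 0 => d [s ->]; apply: bn_ge0.
Qed.

Lemma dS_zero (a b : pts R) : (forall p, p \in a -> p.1 < p.2) ->
  (forall p, p \in b -> p.1 < p.2) -> dS_bar a b = 0 ->
  exists d, perm_eq (pd_shift a d) b.
Proof.
move=> Ha Hb H0.
have Hpos : forall z : R, z \in [seq (p.2 - p.1) / 2 | p <- a ++ b] -> 0 < z.
  move=> z /mapP [p]; rewrite mem_cat => /orP[pa|pb] ->.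
    by have := Ha p pa; rewrite -subr_gt0 => h; apply: divr_gt0.
  by have := Hb p pb; rewrite -subr_gt0 => h; apply: divr_gt0.
have [m m0 Hm] := @pos_min _ Hpos.
have Hma : forall p, p \in a -> m <= (p.2 - p.1) / 2.
  by move=> p pa; apply: Hm; apply: map_f; rewrite mem_cat pa.
have Hmb : forall p, p \in b -> m <= (p.2 - p.1) / 2.
  by move=> p pb; apply: Hm; apply: map_f; rewrite mem_cat pb orbT.
pose D := [seq q.1 - p.1 | p <- a, q <- b] ++ [seq q.2 - p.2 | p <- a, q <- b].
have [del del0 Hdel] := gap D.
pose mu := Num.min m del.
have mum : mu <= m by rewrite ge_min lexx.
have mud : mu <= del by rewrite ge_min lexx orbT.
have mu0 : 0 < mu by rewrite lt_min m0 del0.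
pose eps := mu / 3.
have eps0 : 0 < eps by rewrite /eps; lra.
have epsm : eps < m by rewrite /eps; lra.
have epsd : eps + eps < del by rewrite /eps; lra.
have [e [s ->] He] := inf_adherent eps0 (has_inf_dS a b).
rewrite -/(dS_bar a b) H0 add0r in He.
set a' := pd_shift a s in He *.
have e0 : 0 < eps - bottleneck a' b by rewrite subr_gt0.
have [c [f [tA [tB [pf ->]]]] Hc] := inf_adherent e0 (has_inf_bn a' b).
rewrite -/(bottleneck a' b) addrC subrK in Hc.
have sa' : size a' = size a by rewrite size_map.
have na : forall j, (j < size a')%N ->
    nth (0,0) a' j = ((nth (0,0) a j).1 + s, (nth (0,0) a j).2 + s)
    /\ nth (0,0) a j \in a.
  move=> j hj; rewrite (nth_map (0,0)) -?sa' //; split => //.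
  by apply: mem_nth; rewrite -sa'.
have fS : forall i, exists k, f i = Some k.
  move=> i; case E: (f i) => [k|]; first by exists k.
  have := cost_none _ _ f tA tB i E.
  have [-> ain] := na i (ltn_ord i).
  have := linf_diag ((nth (0, 0) a i).1 + s, (nth (0, 0) a i).2 + s) (tA i).
  have := Hma _ ain; move: (matching_cost _ _ _) Hc => C HC /=.
  lra.
have fsurj : forall k : 'I_(size b), exists i, f i = Some k.
  move=> k; case: (boolP [exists i, f i == Some k]) => [/existsP [i /eqP Ei]|/existsPn H].
    by exists i.
  have := cost_un _ _ f tA tB k (fun i => H i).
  have bin : nth (0,0) b k \in b by apply: mem_nth.
  have := linf_diag (nth (0, 0) b k) (tB k).
  have := Hmb _ bin; move: (matching_cost _ _ _) Hc => C HC /=.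
  lra.
have close : forall i k, f i = Some k ->
    `|(nth (0,0) b k).1 - (nth (0,0) a i).1 - s| < eps /\
    `|(nth (0,0) b k).2 - (nth (0,0) a i).2 - s| < eps.
  move=> i k E; have := cost_some _ _ f tA tB i k E.
  have [-> _] := na i (ltn_ord i); rewrite /linf ge_max /= => /andP[h1 h2].
  have e1 : forall x y : R, x - y - s = - (y + s - x) by move=> x y; ring.
  rewrite !e1 !normrN; split.
    by apply: le_lt_trans h1 _.
  by apply: le_lt_trans h2 _.
have Dmem : forall i k, f i = Some k ->
    (nth (0,0) b k).1 - (nth (0,0) a i).1 \in D /\
    (nth (0,0) b k).2 - (nth (0,0) a i).2 \in D.
  move=> i k _; have [_ ain] := na i (ltn_ord i).
  have bin : nth (0,0) b k \in b by apply: mem_nth.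
  rewrite !mem_cat; split; apply/orP; [left|right];
    exact: (allpairs_f (fun p q => _) ain bin).
have eqD : forall x y, x \in D -> y \in D -> `|x - s| < eps -> `|y - s| < eps -> x = y.
  move=> x y xD yD hx hy; apply/eqP; apply/negPn/negP => ne.
  have := Hdel _ _ xD yD ne.
  have : `|x - y| <= `|x - s| + `|s - y| by apply: ler_distD.
  rewrite distrC in hy; lra.
case: (posnP (size a')) => [sz0|szp].
  have sb0 : size b = 0%N.
    case: (posnP (size b)) => // sb; have [i _] := fsurj (Ordinal sb).
    by move: (ltn_ord i); move: (nat_of_ord i) => x; rewrite sz0.
  have -> : a = [::] by apply: size0nil; rewrite -sa'.
  by rewrite (size0nil sb0); exists 0.
have [k0 Ek0] := fS (Ordinal szp).
pose i0 := Ordinal szp.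
pose d0 := (nth (0,0) b k0).1 - (nth (0,0) a i0).1.
have claim : forall i k, f i = Some k ->
    (nth (0,0) b k).1 - (nth (0,0) a i).1 = d0 /\
    (nth (0,0) b k).2 - (nth (0,0) a i).2 = d0.
  move=> i k E.
  have [m1 m2] := Dmem _ _ E; have [c1 c2] := close _ _ E.
  have [m0' _] := Dmem _ _ Ek0; have [c0' _] := close _ _ Ek0.
  by split; apply: eqD.
exists d0; apply/(perm_iotaP (0,0)).
exists [seq oapp (@nat_of_ord _) 0%N (f i) | i <- enum 'I_(size a')].
  apply: uniq_perm; last first.
  - move=> x; rewrite mem_iota /=; apply/mapP/idP.
      move=> [i _ ->]; have [k Ek] := fS i; by rewrite Ek /= ltn_ord.
    move=> hx; have [i Ei] := fsurj (Ordinal hx).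
    by exists i; rewrite ?mem_enum // Ei.
  - exact: iota_uniq.
  rewrite map_inj_uniq ?enum_uniq // => i j.
  have [k Ek] := fS i; have [l El] := fS j; rewrite Ek El /= => kl.
  have kl' : k = l by apply: val_inj.
  by subst l; apply: (pf _ _ k).
rewrite -map_comp.
have -> : [seq (nth (0, 0) b \o oapp (nat_of_ord (n:=size b)) 0%N \o f) i
           | i <- enum 'I_(size a')] =
          [seq (fun j => ((nth (0,0) a j).1 + d0, (nth (0,0) a j).2 + d0)) (val i)
           | i <- enum 'I_(size a')].
  apply: eq_map => i /=; have [k Ek] := fS i; rewrite Ek /=.
  have [h1 h2] := claim _ _ Ek.
  apply: injective_projections => /=.
    by rewrite -h1 addrC subrK.
  by rewrite -h2 addrC subrK.
rewrite (map_comp (fun j => ((nth (0,0) a j).1 + d0, (nth (0,0) a j).2 + d0)) val).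
rewrite val_enum_ord sa' /pd_shift -{1}(mkseq_nth (0,0) a) /mkseq -map_comp.
by [].
Qed.


Lemma pdiag_pos (A : pts R) : is_pdiag A -> forall p, p \in A -> 0 < p.1 /\ 0 < p.2.
Proof. by move=> H p /H [h1 h2]; split => //; apply: lt_trans h2. Qed.

Lemma log_lt (A : pts R) : is_pdiag A -> forall p, p \in pd_log A -> p.1 < p.2.
Proof.
move=> H p /mapP [q qA ->] /=; have [h1 h2] := H q qA.
by rewrite ltr_ln // posrE //; apply: lt_trans h2.
Qed.

Lemma log_scale (A : pts R) c : is_pdiag A -> 0 < c ->
  pd_log (pd_scale c A) = pd_shift (pd_log A) (ln c).
Proof.
move=> H c0; rewrite /pd_log /pd_scale /pd_shift -!map_comp.
apply/eq_in_map => p pA /=; have [h1 h2] := pdiag_pos _ H _ pA.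
by rewrite !lnM ?posrE // ![ln c + _]addrC.
Qed.

Lemma equiv_perm (A A' : pts R) : is_pdiag A' -> pd_equiv A A' ->
  exists t, perm_eq (pd_log A) (pd_shift (pd_log A') t).
Proof.
move=> H [c [c0 p]]; exists (ln c); rewrite -log_scale //.
exact: perm_map.
Qed.

Lemma exp_log (A : pts R) : is_pdiag A ->
  map (fun p => (expR p.1, expR p.2)) (pd_log A) = A.
Proof.
move=> H; rewrite /pd_log -map_comp -[RHS]map_id; apply/eq_in_map => -[x y] pA /=.
have [h1 h2] := pdiag_pos _ H _ pA; rewrite !lnK ?posrE //.
Qed.

End Aux.

Theorem mainTheorem3 (R : realType) :
  (* well defined: independent of representatives *)
  (forall A A' B B' : pts R,
      is_pdiag A -> is_pdiag A' -> is_pdiag B -> is_pdiag B' ->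
      pd_equiv A A' -> pd_equiv B B' -> D_S A B = D_S A' B') /\
  (* metric on equivalence classes *)
  (forall A B : pts R, is_pdiag A -> is_pdiag B -> 0 <= D_S A B) /\
  (forall A B : pts R, is_pdiag A -> is_pdiag B -> D_S A B = D_S B A) /\
  (forall A B C : pts R, is_pdiag A -> is_pdiag B -> is_pdiag C ->
      D_S A C <= D_S A B + D_S B C) /\
  (forall A B : pts R, is_pdiag A -> is_pdiag B ->
      (D_S A B = 0 <-> pd_equiv A B)).
Proof.
split.
  move=> A A' B B' _ HA' _ HB' eA eB.
  have [t1 p1] := equiv_perm _ _ _ HA' eA; have [t2 p2] := equiv_perm _ _ _ HB' eB.
  rewrite /D_S (dS_perml _ _ _ _ p1) dS_shiftl (dS_permr _ _ _ _ p2) dS_shiftr.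
  by [].
split; first by move=> A B _ _; apply: dS_ge0.
split; first by move=> A B _ _; rewrite /D_S dSC.
split; first by move=> A B C _ _ _; apply: dS_tri.
move=> A B HA HB; split.
  move=> H0; have [d p] := dS_zero _ _ _ (log_lt _ _ HA) (log_lt _ _ HB) H0.
  have p2 := perm_map (fun p => (expR p.1, expR p.2)) p.
  rewrite exp_log // in p2.
  have E : [seq (expR p.1, expR p.2) | p <- pd_shift (pd_log A) d] = pd_scale (expR d) A.
    rewrite /pd_shift /pd_log /pd_scale -!map_comp; apply/eq_in_map => q qA /=.
    have [h1 h2] := pdiag_pos _ _ HA _ qA.
    by rewrite !expRD !lnK ?posrE // ![_ * expR d]mulrC.
  rewrite E in p2.
  exists (expR (- d)); split; first exact: expR_gt0.
  have p3 := perm_map (fun p => (expR (- d) * p.1, expR (- d) * p.2)) p2.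
  suff <- : [seq (expR (- d) * p.1, expR (- d) * p.2) | p <- pd_scale (expR d) A] = A.
    exact: p3.
  rewrite /pd_scale -map_comp -[RHS]map_id; apply: eq_map => -[x y] /=.
  by rewrite !mulrA -expRD addNr expR0 !mul1r.
move=> eq; have [t p] := equiv_perm _ _ _ HB eq.
by rewrite /D_S (dS_perml _ _ _ _ p) dS_shiftl dS_refl.
Qed.
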